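(* Let $\mathcal{H}$ be a hypergraph on vertex set $V$ with $\textsc{VC-dim}(\mathcal{H})<k$. Then $|\mathrm{ext}_k(\mathcal{H})|=O(|V|^k)$.
   Context: A hypergraph $\mathcal{H}$ on $V$ is a family of subsets (hyperedges) of $V$. A $k$-trace on $V$ is a pair $(T,S)$ with $S\subseteq V$, $|S|=k$, $T\subseteq S$; a set $F\subseteq V$ realizes $(T,S)$ if $F\cap S=T$. $\mathrm{traces}_k(F)$ is the set of $k$-traces realized by $F$, and $\mathrm{traces}_k(\mathcal{H})=\bigcup_{F\in\mathcal{H}}\mathrm{traces}_k(F)$. The $k$-extension $\mathrm{ext}_k(\mathcal{H})$ is the hypergraph on $V$ whose hyperedges are all $E\subseteq V$ with $\mathrm{traces}_k(E)\subseteq\mathrm{traces}_k(\mathcal{H})$. A set $U$ is shattered by $\mathcal{H}$ if for each $U'\subseteq U$ some $F\in\mathcal{H}$ has $F\cap U=U'$; $\textsc{VC-dim}(\mathcal{H})$ is the largest size of a shattered set. *)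

(* Defs.v *)
From mathcomp Require Import all_boot.
Set Implicit Arguments. Unset Strict Implicit. Unset Printing Implicit Defensive.

Section Traces.
Variable T : finType.

Definition is_ktrace (k : nat) (p : {set T} * {set T}) : bool :=
  (#|p.2| == k) && (p.1 \subset p.2).

Definition traces (k : nat) (F : {set T}) : {set {set T} * {set T}} :=
  [set p | is_ktrace k p && (F :&: p.2 == p.1)].

Definition traces_hyp (k : nat) (H : {set {set T}}) : {set {set T} * {set T}} :=
  \bigcup_(F in H) traces k F.

Definition ext (k : nat) (H : {set {set T}}) : {set {set T}} :=
  [set E : {set T} | traces k E \subset traces_hyp k H].

Definition shattered (H : {set {set T}}) (U : {set T}) : Prop :=
  forall U' : {set T}, U' \subset U -> exists2 F, F \in H & F :&: U = U'.

Definition VCdim_lt (H : {set {set T}}) (k : nat) : Prop :=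
  forall U : {set T}, shattered H U -> #|U| < k.
End Traces.

(* Main.v *)
Require Import Defs.
From mathcomp Require Import all_boot.
Set Implicit Arguments. Unset Strict Implicit. Unset Printing Implicit Defensive.

Section Pajor.
Variable T : finType.
Implicit Types (F G : {set {set T}}) (U A B : {set T}).

Definition sh F : {set {set T}} :=
  [set U : {set T} | [forall U' : {set T}, (U' \subset U) ==> [exists A in F, A :&: U == U']]].

Lemma shP F U : reflect (shattered F U) (U \in sh F).
Proof.
rewrite inE; apply: (iffP forallP) => [H U' sU | H U'].
- have /existsP[A /andP[AF /eqP e]] := implyP (H U') sU; by exists A.
- apply/implyP => sU; have [A AF e] := H U' sU; apply/existsP; exists A.
  by rewrite AF e eqxx.
Qed.

Lemma sh_avoid F x U : (forall A, A \in F -> x \notin A) -> U \in sh F -> x \notin U.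
Proof.
move=> hF /shP sU; apply/negP => xU.
have [A AF e] := sU U (subxx U).
have : x \in A :&: U by rewrite e.
by rewrite inE (negbTE (hF A AF)).
Qed.

Lemma pajor_base F : \bigcup_(A in F) A = set0 -> #|F| <= #|sh F|.
Proof.
move=> e.
have sub : F \subset [set set0].
  apply/subsetP => A AF; rewrite inE.
  have h : A \subset \bigcup_(B in F) B := bigcup_sup A AF.
  by rewrite e subset0 in h.
case: (set_0Vmem F) => [->|[A0 A0F]]; first by rewrite cards0.
apply: leq_trans (subset_leq_card sub) _; rewrite cards1 card_gt0.
apply/set0Pn; exists set0; apply/shP => U'; rewrite subset0 => /eqP ->.
by exists A0; rewrite ?setI0.
Qed.

Section Step.
Variables (F : {set {set T}}) (x : T).
Let P := [set A : {set T} | x \in A].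
Let Fx := F :&: P.
Let Fn := F :\: P.
Let g := fun A : {set T} => A :\ x.
Let F0 := Fn :|: g @: Fx.
Let F1 := Fn :&: g @: Fx.

Lemma ginj : {in Fx &, injective g}.
Proof.
move=> A B; rewrite !inE => /andP[_ xA] /andP[_ xB] e.
by rewrite -(setD1K xA) -(setD1K xB); rewrite /g in e; rewrite e.
Qed.

Lemma card_F01 : #|F0| + #|F1| = #|F|.
Proof. rewrite cardsUI card_in_imset; last exact: ginj. by rewrite addnC /Fn /Fx cardsID. Qed.

Lemma F0_avoid A : A \in F0 -> x \notin A.
Proof.
rewrite inE => /orP[|/imsetP[B _ ->]]; first by rewrite !inE => /andP[].
by rewrite /g !inE eqxx.
Qed.

Lemma F1_F0 : F1 \subset F0.
Proof. exact: subset_trans (subsetIl _ _) (subsetUl _ _). Qed.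

Lemma F1_avoid A : A \in F1 -> x \notin A.
Proof. by move=> /(subsetP F1_F0); apply: F0_avoid. Qed.

Lemma F1P B : B \in F1 -> [/\ B \in F, x \notin B & x |: B \in F].
Proof.
rewrite !inE => /andP[/andP[xB BF] /imsetP[A]]; rewrite !inE => /andP[AF xA] eB.
by rewrite BF xB eB /g setD1K.
Qed.

Lemma F0P B : B \in F0 -> exists2 A, A \in F & B = A \/ B = A :\ x.
Proof.
rewrite inE => /orP[|/imsetP[A]]; first by rewrite !inE => /andP[_ BF]; exists B; auto.
by rewrite !inE => /andP[AF _] ->; exists A; auto.
Qed.

Lemma union_F0 : \bigcup_(A in F0) A \subset (\bigcup_(A in F) A) :\ x.
Proof.
apply/bigcupsP => B BF0; rewrite subsetD1 F0_avoid // andbT.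
have [A AF [->|->]] := F0P BF0; first exact: bigcup_sup.
exact: subset_trans (subD1set _ _) (bigcup_sup _ AF).
Qed.

Lemma union_F1 : \bigcup_(A in F1) A \subset (\bigcup_(A in F) A) :\ x.
Proof.
apply: subset_trans union_F0; apply/bigcupsP => B BF1.
exact: bigcup_sup (subsetP F1_F0 _ BF1).
Qed.

Lemma sh_F0 : sh F0 \subset sh F :\: P.
Proof.
apply/subsetP => U UF0; have xU := sh_avoid F0_avoid UF0.
apply/setDP; split; last by rewrite inE.
apply/shP => U' sU.
have [B BF0 e] := shP _ _ UF0 U' sU.
have [A AF [EB|EB]] := F0P BF0; first by exists A; rewrite // -EB.
exists A => //; rewrite -e EB; apply/setP => y; rewrite !inE.
by case: (eqVneq y x) => [->|]; rewrite ?(negbTE xU) ?andbF.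
Qed.

Lemma sh_F1 : (fun U => x |: U) @: sh F1 \subset sh F :&: P.
Proof.
apply/subsetP => W /imsetP[U UF1 ->]; have xU := sh_avoid F1_avoid UF1.
apply/setIP; split; last by rewrite inE setU11.
apply/shP => W' sW.
have sU : W' :\ x \subset U.
  apply/subsetP => y; rewrite !inE => /andP[yx yW].
  by have := subsetP sW y yW; rewrite !inE (negbTE yx).
have [B BF1 e] := shP _ _ UF1 _ sU.
have [BF xB xBF] := F1P BF1.
have ey y : (y \in B) && (y \in U) = (y != x) && (y \in W').
  by rewrite -!in_setI -in_setD1 e.
case xW: (x \in W').
- exists (x |: B) => //; apply/setP => y; rewrite !inE.
  case: (eqVneq y x) => [->|yx] /=; first by rewrite xW.
  by rewrite ey yx.
- exists B => //; apply/setP => y; rewrite !inE.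
  case: (eqVneq y x) => [->|yx] /=; first by rewrite xW (negbTE xB).
  by rewrite ey yx.
Qed.

Lemma pajor_step : #|F0| <= #|sh F0| -> #|F1| <= #|sh F1| -> #|F| <= #|sh F|.
Proof.
move=> h0 h1; rewrite -card_F01 -(cardsID P (sh F)).
rewrite addnC leq_add //; last exact: (leq_trans h0 (subset_leq_card sh_F0)).
apply: (leq_trans h1).
have inj : {in sh F1 &, injective (fun U => x |: U)}.
  move=> U V UF VF e.
  by rewrite -(setU1K (sh_avoid F1_avoid UF)) -(setU1K (sh_avoid F1_avoid VF)) e.
rewrite -(card_in_imset inj); exact: subset_leq_card sh_F1.
Qed.

Lemma pajor_union0 : #|(\bigcup_(A in F) A) :\ x| < #|\bigcup_(A in F) A| ->
  #|\bigcup_(A in F0) A| < #|\bigcup_(A in F) A| /\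
  #|\bigcup_(A in F1) A| < #|\bigcup_(A in F) A|.
Proof.
move=> h; split.
  exact: leq_ltn_trans (subset_leq_card union_F0) h.
exact: leq_ltn_trans (subset_leq_card union_F1) h.
Qed.
End Step.

Lemma pajor n F : #|\bigcup_(A in F) A| <= n -> #|F| <= #|sh F|.
Proof.
elim: n F => [|n IH] F hn.
  by apply: pajor_base; apply: cards0_eq; apply/eqP; rewrite -leqn0.
case: (set_0Vmem (\bigcup_(A in F) A)) => [e|[x xU]]; first exact: pajor_base.
have h : #|(\bigcup_(A in F) A) :\ x| < #|\bigcup_(A in F) A|.
  by rewrite (cardsD1 x (\bigcup_(A in F) A)) xU.
have [h0 h1] := pajor_union0 h.
apply: (pajor_step (x := x)); apply: IH; rewrite -ltnS; exact: leq_trans hn.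
Qed.
End Pajor.

Lemma sub_card (T : finType) (U : {set T}) m :
  m <= #|U| -> exists2 S : {set T}, S \subset U & #|S| = m.
Proof.
elim: m => [|m IH] h; first by exists set0; rewrite ?sub0set ?cards0.
have [S sSU cS] := IH (ltnW h).
have : 0 < #|U :\: S| by rewrite cardsDS // subn_gt0 cS.
rewrite card_gt0 => /set0Pn[y /setDP[yU yS]].
exists (y |: S); first by rewrite subUset sub1set yU.
by rewrite cardsU1 yS cS.
Qed.

Lemma ext_sh (T : finType) k (H : {set {set T}}) U :
  VCdim_lt H k -> U \in sh (ext k H) -> #|U| < k.
Proof.
move=> hVC /shP shU; rewrite ltnNge; apply/negP => hk.
have [S sSU cS] := sub_card hk.
suff : #|S| < k by rewrite cS ltnn.
apply: hVC => S' sS'.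
have [E Eext e] := shU S' (subset_trans sS' sSU).
have eS : E :&: S = S'.
  by rewrite -(setIidPr sSU) setIA e (setIidPl sS').
have tr : (S', S) \in traces k E.
  by rewrite inE /is_ktrace /= cS eqxx sS' eS eqxx.
move: Eext; rewrite inE => /subsetP /(_ _ tr) /bigcupP[F FH].
rewrite inE => /andP[_ /eqP eF]; by exists F.
Qed.

Lemma ffact_le m n : n ^_ m <= n ^ m.
Proof.
elim: m => [|m IH] //; rewrite ffactnSr expnSr; exact: leq_mul IH (leq_subr m n).
Qed.

Lemma bin_le n m : 'C(n, m) <= n ^ m.
Proof.
apply: leq_trans (ffact_le m n); rewrite -bin_ffact; exact: leq_pmulr (fact_gt0 m).
Qed.

Lemma count_small (T : finType) k : 0 < #|T| ->
  #|[set U : {set T} | #|U| < k]| <= k * #|T| ^ k.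
Proof.
move=> hT; elim: k => [|k IH].
  by rewrite leqn0 cards_eq0; apply/eqP/setP => U; rewrite !inE ltn0.
have sub : [set U : {set T} | #|U| < k.+1] \subset
   [set U : {set T} | #|U| < k] :|: [set U : {set T} | #|U| == k].
  by apply/subsetP => U; rewrite !inE ltnS leq_eqVlt orbC.
apply: (leq_trans (subset_leq_card sub)).
apply: (leq_trans (leq_addr #|[set U : {set T} | #|U| < k] :&: [set U : {set T} | #|U| == k]| _)).
rewrite cardsUI card_draws.
apply: (leq_trans (leq_add IH (bin_le _ _))).
rewrite addnC -mulSn leq_mul2l; apply/orP; right; exact: leq_pexp2l hT (leqnSn k).
Qed.

Theorem corollary2 (k : nat) :
  exists C N : nat,
    forall (T : finType) (H : {set {set T}}),
      N <= #|T| -> VCdim_lt H k -> #|ext k H| <= C * #|T| ^ k.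
Proof.
exists k, 1 => T H hT hVC.
apply: (leq_trans (pajor (leqnn _))).
apply: (leq_trans _ (count_small k hT)); apply: subset_leq_card.
by apply/subsetP => U /(ext_sh hVC) hU; rewrite inE.
Qed.
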